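(* Assume the weak form of Szpiro's conjecture. Let $u\geq 1$ be a positive integer, $r\geq1$, and $A_1,\dots,A_r$ fixed positive integers. Then the equation $$\prod_{i=1}^r A_i^{n_i}n_i! = x^2-u^2$$ has only finitely many solutions $(n_1,\dots,n_r,x)$ in positive integers $n_1,\dots,n_r$ and integers $x$.
   Context: For a nonzero integer $a$, $N(a)=\prod_{p\mid a}p$ is its radical. Weak form of Szpiro's conjecture: there exists a constant $s>0$ such that for all pairwise coprime nonzero integers $A,B,C$ with $A+B=C$ one has $|ABC|<N(ABC)^{s}$. *)

(* Defs.v *)
From Stdlib Require Import Reals.
From mathcomp Require Import all_boot all_order all_algebra.
Set Implicit Arguments. Unset Strict Implicit. Unset Printing Implicit Defensive.
Import Order.TTheory GRing.Theory Num.Theory.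
Local Open Scope ring_scope.

Definition radical (a : int) : nat := (\prod_(p <- primes (absz a)) p)%N.

Definition szpiro_weak : Prop :=
  exists s : R, Rlt R0 s /\
    forall A B C : int,
      A != 0 -> B != 0 -> C != 0 ->
      coprimez A B -> coprimez A C -> coprimez B C ->
      A + B = C ->
      Rlt (INR (absz (A * B * C))) (Rpower (INR (radical (A * B * C))) s).

(* Main.v *)
Require Import Defs.
From Stdlib Require Import Reals Lra Lia.
From mathcomp Require Import all_boot all_order all_algebra zify ring.

Lemma prime_dvd_fact_le p n : prime p -> p %| n`! -> p <= n.
Proof.
move=> pp; elim: n => [|n IH]; first by rewrite /= Euclid_dvd1.
rewrite factS Euclid_dvdM // => /orP [h|h].
  by apply: dvdn_leq.
by apply: leq_trans (IH h) _.
Qed.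

Lemma mem_primes_fact p n : (p \in primes n`!) = prime p && (p <= n).
Proof.
rewrite mem_primes fact_gt0 /=; apply/andP/andP => [[pp h]|[pp h]].
  by split => //; apply: prime_dvd_fact_le.
by split => //; apply: dvdn_fact; rewrite prime_gt0.
Qed.

Lemma prod_primes_dvd (s : seq nat) m :
  uniq s -> all prime s -> (forall p, p \in s -> p %| m) -> \prod_(p <- s) p %| m.
Proof.
elim: s => [|q s IH] /=; first by rewrite big_nil dvd1n.
move=> /andP [qs us] /andP [pq ps] hd.
rewrite big_cons Gauss_dvd.
  rewrite hd ?mem_head //= IH // => p hp; apply: hd; by rewrite in_cons hp orbT.
rewrite prime_coprime // Euclid_dvd_prod // big_has; apply/hasPn => p hp /=.
rewrite dvdn_prime2 //; last by move/allP: ps; apply.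
by apply/eqP => e; move: qs; rewrite e hp.
Qed.

Lemma bin_le_pow2 n k : 'C(n, k) <= 2 ^ n.
Proof.
elim: n k => [|n IH] [|k] //=; first by rewrite bin0 expn_gt0.
by rewrite binS expnS mul2n -addnn leq_add.
Qed.

Definition prm N := \prod_(p <- primes N`!) p.

Lemma prm_gt0 N : 0 < prm N.
Proof. rewrite /prm big_seq prodn_cond_gt0 // => p; rewrite mem_primes; case/and3P => /prime_gt0 //. Qed.

Lemma prm_dvd N m : (forall p, prime p -> p <= N -> p %| m) -> prm N %| m.
Proof.
move=> h; apply: prod_primes_dvd; first exact: primes_uniq.
  by apply/allP => p; rewrite mem_primes => /andP[].
by move=> p; rewrite mem_primes_fact => /andP[]; apply: h.
Qed.

Lemma prm_odd k : prm k.*2.+1 %| prm k.+1 * 'C(k.*2.+1, k).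
Proof.
apply: prm_dvd => p pp hp.
case: (leqP p k.+1) => hk.
  apply: dvdn_mulr; rewrite /prm; apply: (@dvdn_trans (\prod_(q <- [:: p]) q)).
    by rewrite big_seq1.
  apply: prod_primes_dvd => //=; first by rewrite pp.
  move=> q; rewrite inE => /eqP ->.
  rewrite /prm.
  rewrite (perm_big _ (perm_to_rem (_ : p \in primes k.+1`!))) ?big_cons ?dvdn_mulr //.
  by rewrite mem_primes_fact pp.
apply: dvdn_mull.
have hf : p %| (k.*2.+1)`! by apply: dvdn_fact; rewrite prime_gt0.
have e := @bin_fact k.*2.+1 k (leq_trans (leq_addr k k) _).
move: hf; rewrite -e; last by rewrite -addnn leqnSn.
rewrite !Euclid_dvdM // => /orP[//|/orP[h|h]].
  by move: (prime_dvd_fact_le _ _ pp h); lia.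
by move: (prime_dvd_fact_le _ _ pp h); lia.
Qed.

Lemma prm_even k : 0 < k -> prm k.*2.+2 %| prm k.*2.+1.
Proof.
move=> k0; apply: prm_dvd => p pp hp.
rewrite /prm (perm_big _ (perm_to_rem (_ : p \in primes (k.*2.+1)`!))) ?big_cons ?dvdn_mulr //.
rewrite mem_primes_fact pp /=.
rewrite leq_eqVlt in hp; case/orP: hp => [/eqP e|//].
have h2 : 2 %| p.
  rewrite e; have -> : k.*2.+2 = 2 * k.+1 by lia.
  by rewrite dvdn_mulr.
move: h2; rewrite dvdn_prime2 // => /eqP; lia.
Qed.

Lemma prm_le N : prm N <= 8 ^ N.
Proof.
elim/ltn_ind: N => N IH.
have [[k e] | [k e]] : (exists k, N = k.*2) \/ (exists k, N = k.*2.+1).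
  move: (odd_double_half N); case: (odd N) => /= e; [right|left]; exists N./2; lia.
all: subst N.
- case: k IH => [|k] IH; first by rewrite /prm /= big_nil.
  case: k IH => [|k] IH.
    rewrite /prm /= (_ : primes 2 = [:: 2]) ?big_seq1 //.
  rewrite (_ : (k.+2).*2 = (k.+1).*2.+2); last by lia.
  apply: leq_trans (dvdn_leq (prm_gt0 _) (@prm_even k.+1 (ltn0Sn k))) _.
  apply: leq_trans (IH _ _) _; first by lia.
  by rewrite leq_exp2l //; lia.
- case: k IH => [|k] IH; first by rewrite /prm /= big_nil.
  have h0 : 0 < prm k.+2 * 'C((k.+1).*2.+1, k.+1) by rewrite muln_gt0 prm_gt0 bin_gt0; lia.
  apply: leq_trans (dvdn_leq h0 (prm_odd k.+1)) _.
  apply: leq_trans (leq_mul (IH k.+2 _) (bin_le_pow2 _ _)) _; first by lia.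
  by rewrite -[8]/(2^3) -!expnM -expnD leq_exp2l //; lia.
Qed.

Lemma fact_ge T D k : T.+1 >= D -> D ^ k * T`! <= (T + k)`!.
Proof.
move=> hT; elim: k => [|k IH]; first by rewrite addn0 expn0 mul1n.
rewrite addnS factS expnS -mulnA; apply: leq_mul => //; lia.
Qed.

Lemma fact_big C D : exists B, forall N, B <= N -> C * D ^ N < N`!.
Proof.
exists (2 * D + (C * D ^ (2 * D)).+1) => N hN.
set X := C * D ^ (2 * D) in hN *.
have [k e] : exists k, N = 2 * D + k by exists (N - 2 * D); lia.
subst N.
have hk : X < 2 ^ k.
  apply: leq_trans (ltnW (ltn_expl k (ltnSn 1))); lia.
clear hN; rewrite {}/X in hk; case: D hk => [|D] hk.
  rewrite muln0 !add0n in hk *; case: k hk => [|k] hk.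
    by rewrite !expn0 muln1 in hk *; rewrite fact0.
  by rewrite exp0n // muln0 fact_gt0.
apply: leq_trans (fact_ge (2 * D.+1) (2 * D.+1) k _); last by [].
apply: leq_trans (leq_pmulr _ (fact_gt0 _)).
rewrite expnMn expnD mulnA mulnC [_ * D.+1 ^ k]mulnC ltn_pmul2l ?expn_gt0 //.
Qed.

Lemma INR_expn m n : INR (m ^ n) = pow (INR m) n.
Proof.
elim: n => [|n IH]; first by rewrite expn0.
by rewrite expnS mult_INR IH.
Qed.

Definition radn (m : nat) := \prod_(p <- primes m) p.

Lemma radn_gt0 m : 0 < radn m.
Proof. rewrite /radn big_seq prodn_cond_gt0 // => p; rewrite mem_primes; case/and3P => /prime_gt0 //. Qed.

Lemma szpiro_nat : szpiro_weak -> exists S : nat, forall a b c : nat,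
  0 < a -> 0 < b -> 0 < c -> coprime a b -> coprime a c -> coprime b c ->
  a + b = c -> a * b * c < radn (a * b * c) ^ S.
Proof.
case=> s [s0 H].
have [hu _] := archimed s.
have hz : Z.lt 0 (up s) by apply: lt_0_IZR; lra.
exists (Z.to_nat (up s)) => a b c a0 b0 c0 cab cac cbc e.
have := H (Posz a) (Posz b) (Posz c).
rewrite !coprimezE /= -!PoszM /= => /(_ _ _ _ cab cac cbc).
have ne0 : forall n, 0 < n -> (Posz n != 0%R) by move=> n; case: n.
move=> /(_ (ne0 _ a0) (ne0 _ b0) (ne0 _ c0)).
rewrite -PoszD e => /(_ erefl) h.
have r1 : Rle 1 (INR (radn (a * b * c))).
  by have := radn_gt0 (a*b*c); move/ssrnat.leP => h1; apply: (le_INR 1).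
have h2 := Rle_Rpower _ s (INR (Z.to_nat (up s))) r1.
rewrite Rpower_pow in h2; last by lra.
rewrite -INR_expn in h2.
apply/ssrnat.ltP; apply: INR_lt.
apply: Rlt_le_trans h (h2 _).
rewrite INR_IZR_INZ Znat.Z2Nat.id; [lra|lia].
Qed.

Lemma radn_le m M : 0 < M -> (forall p, prime p -> p %| m -> p %| M) -> radn m <= M.
Proof.
move=> M0 h; apply: dvdn_leq => //; apply: prod_primes_dvd; first exact: primes_uniq.
  by apply/allP => p; rewrite mem_primes => /andP[].
by move=> p; rewrite mem_primes => /and3P[pp _]; apply: h.
Qed.

Lemma expn_mono m n e : m <= n -> m ^ e <= n ^ e.
Proof. by move=> h; elim: e => // e IH; rewrite !expnS leq_mul. Qed.

Lemma main_bound (S u K : nat) :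
  (forall a b c : nat,
    0 < a -> 0 < b -> 0 < c -> coprime a b -> coprime a c -> coprime b c ->
    a + b = c -> a * b * c < radn (a * b * c) ^ S) ->
  0 < u -> 0 < K ->
  exists B, forall y P N, P + u * u = y * y -> 0 < P -> N`! <= P ->
    (forall p, prime p -> p %| P -> p %| K \/ p <= N) -> N < B.
Proof.
move=> Sz u0 K0.
have [B hB] := fact_big (4 * u * u * (2 * u * K) ^ S) (8 ^ S).
exists B => y P N eP P0 hN hp.
rewrite ltnNge; apply/negP => /hB hlt.
have yu : u < y.
  rewrite ltnNge; apply/negP => hy; have := leq_mul hy hy; rewrite -eP; lia.
have [t et] : exists t, y = u + t by exists (y - u); lia.
set b0 := t; set a0 := t + 2 * u.
have eP' : P = b0 * a0.
  apply/eqP; rewrite -(eqn_add2r (u * u)) eP et /b0 /a0; apply/eqP; ring.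
set d := gcdn b0 a0.
have d0 : 0 < d by rewrite gcdn_gt0 /b0; apply/orP; left; lia.
have db0 : d %| b0 by apply: dvdn_gcdl.
have da0 : d %| a0 by apply: dvdn_gcdr.
have du : d %| 2 * u.
  by rewrite -(dvdn_addr _ db0).
set b := b0 %/ d; set a := a0 %/ d; set c := (2 * u) %/ d.
have eb : b0 = b * d by rewrite divnK.
have ea : a0 = a * d by rewrite divnK.
have ec : 2 * u = c * d by rewrite divnK.
have eabc : b + c = a.
  apply/eqP; rewrite -(eqn_pmul2r d0) mulnDl -eb -ec -ea /a0 /b0; apply/eqP; lia.
have b0p : 0 < b by rewrite lt0n; apply/eqP => e0; move: eb; rewrite e0 /b0 mul0n => t0; move: yu; rewrite et t0; lia.
have c0p : 0 < c by rewrite lt0n; apply/eqP => e0; move: ec; rewrite e0; lia.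
have a0p : 0 < a by lia.
have cba : coprime b a.
  rewrite /coprime -(eqn_pmul2l d0) muln_gcdr muln1 ![d * _]mulnC -eb -ea.
  by rewrite /d.
have cbc : coprime b c by rewrite /coprime -(gcdnDl b c) eabc.
have cca : coprime c a by rewrite /coprime -eabc gcdnDr gcdnC.
have := Sz b c a b0p c0p a0p cbc cba cca eabc.
have hrad : radn (b * c * a) <= 2 * u * K * prm N.
  apply: radn_le; first by rewrite !muln_gt0 u0 K0 prm_gt0.
  move=> p pp hpd.
  have : [|| p %| b, p %| c | p %| a] by rewrite orbA -!Euclid_dvdM.
  have hP : p %| P -> p %| 2 * u * K * prm N.
    move=> /(hp p pp) [h|h].
      by rewrite -mulnA mulnC -mulnA dvdn_mulr // dvdn_mull.
    apply: dvdn_mull; rewrite /prm.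
    rewrite (perm_big _ (perm_to_rem (_ : p \in primes N`!))) ?big_cons ?dvdn_mulr //.
    by rewrite mem_primes_fact pp.
  case/or3P => [h|h|h].
  - apply: hP; rewrite eP' eb; by rewrite !dvdn_mulr.
  - apply: (dvdn_trans (_ : p %| 2 * u)); first by rewrite ec dvdn_mulr.
    by rewrite -mulnA dvdn_mulr.
  - apply: hP; rewrite eP' ea; by rewrite dvdn_mull // dvdn_mulr.
move=> hS.
have h1 : P <= 4 * u * u * (b * c * a).
  have hd : d <= 2 * u by apply: dvdn_leq => //; lia.
  have hdd : d * d <= 4 * u * u.
    have := leq_mul hd hd; rewrite (_ : 2 * u * (2 * u) = 4 * u * u) //; ring.
  rewrite eP' eb ea (_ : b * d * (a * d) = (d * d) * (b * a)); last by ring.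
  rewrite (_ : b * c * a = c * (b * a)); last by ring.
  by apply: leq_mul => //; apply: leq_pmull.
have h2 : radn (b * c * a) ^ S <= (2 * u * K) ^ S * 8 ^ (S * N).
  rewrite (mulnC S N) expnM -expnMn; apply: expn_mono.
  by apply: leq_trans hrad _; rewrite leq_mul2l prm_le orbT.
move: hlt; rewrite ltnNge => /negP; apply.
apply: leq_trans hN _.
apply: leq_trans h1 _.
rewrite -[4 * u * u * _ * _]mulnA leq_mul2l; apply/orP; right.
apply: leq_trans (ltnW hS) (leq_trans h2 _).
by rewrite expnM.
Qed.
Import Order.TTheory GRing.Theory Num.Theory.
Local Open Scope ring_scope.

Lemma sq_absz (x : int) : ((`|x| * `|x|)%N)%:Z = x ^+ 2.
Proof. by rewrite PoszM abszE -normrM -expr2 ger0_norm // sqr_ge0. Qed.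

Theorem theorem3 (H : szpiro_weak) (u r : nat) (hu : (1 <= u)%N) (hr : (1 <= r)%N)
    (A : 'I_r -> nat) (hA : forall i, (0 < A i)%N) :
  exists sols : seq ({ffun 'I_r -> nat} * int),
    forall (n : {ffun 'I_r -> nat}) (x : int),
      (forall i, (0 < n i)%N) ->
      (\prod_(i < r) (A i ^ n i * (n i)`!))%N%:Z = x ^+ 2 - (u%:Z) ^+ 2 ->
      (n, x) \in sols.
Proof.
have [S Sz] := szpiro_nat H.
set K := (\prod_(i < r) A i)%N.
have K0 : (0 < K)%N by rewrite prodn_gt0.
have [B hB] := @main_bound S u K Sz hu K0.
set PB := (\prod_(i < r) (A i ^ B * B`!))%N.
set X0 := (PB + u * u)%N.
exists [seq (f, x) | f <- [seq ([ffun i => nat_of_ord (g i)] : {ffun 'I_r -> nat}) | g : {ffun 'I_r -> 'I_B} <- enum {ffun 'I_r -> 'I_B}],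
                     x <- [seq (k%:Z - X0%:Z) | k <- iota 0 (2 * X0)%N.+1]].
move=> n x n0 eq.
set P := (\prod_(i < r) (A i ^ n i * (n i)`!))%N in eq.
have eP : (P + u * u = `|x| * `|x|)%N.
  apply/eqP; rewrite -eqz_nat PoszD sq_absz eq PoszM -expr2; apply/eqP.
  by rewrite subrK.
have P0 : (0 < P)%N by rewrite prodn_gt0 // => i; rewrite muln_gt0 expn_gt0 hA fact_gt0.
set N := (\max_(i < r) n i)%N.
have [i0 ei0] := @bigop.eq_bigmax _ (fun i => n i) (ltac:(by rewrite card_ord)); rewrite -/N in ei0.
have hN : (N`! <= P)%N.
  apply: dvdn_leq => //; rewrite /P (bigD1 i0) //= ei0.
  by rewrite dvdn_mulr // dvdn_mull.
have hp : forall p, prime p -> (p %| P)%N -> (p %| K)%N \/ (p <= N)%N.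
  move=> p pp; rewrite /P Euclid_dvd_prod // big_orE => /existsP [i /= hi].
  rewrite Euclid_dvdM // Euclid_dvdX // in hi.
  case/orP: hi => [/andP [hi _]|hi]; [left|right].
    by rewrite /K (bigD1 i) //= dvdn_mulr.
  apply: leq_trans (prime_dvd_fact_le _ _ pp hi) _.
  exact: leq_bigmax.
have NB := hB _ _ _ eP P0 hN hp.
have hnB : forall i, (n i < B)%N by move=> i; apply: leq_ltn_trans (leq_bigmax i) NB.
have hPB : (P <= PB)%N.
  apply: leq_prod => i _; apply: leq_mul; last exact: leq_fact (ltnW (hnB i)).
  by rewrite leq_pexp2l // ltnW.
have hx : (`|x| <= X0)%N.
  case: (posnP `|x|) => [-> //| xp].
  apply: leq_trans (leq_pmulr _ xp) _; rewrite -eP /X0 leq_add2r //.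
have hxm : x \in [seq k%:Z - X0%:Z | k <- iota 0 (2 * X0)%N.+1].
  apply/mapP; exists (absz (x + X0%:Z)).
    rewrite mem_iota add0n ltnS.
    move: hx; lia.
  move: hx; lia.
apply/allpairsP; exists ([ffun i => val (Ordinal (hnB i))], x); split => //.
- apply/mapP; exists [ffun i => Ordinal (hnB i)]; first by rewrite mem_enum.
  by apply/ffunP => i; rewrite !ffunE.
- congr (_, _); apply/ffunP => i; by rewrite !ffunE.
Qed.
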